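(* Assume the standing setting and assumptions (A4)–(A8) described in the context. Let $k\in\mathbb{N}$, $k\ge 1$, let $U(T)=U_k(T)$ for all $T\in\mathcal{T}_H$, and let $u_H^{\mathrm{G\text{-}LOD}}\in V^{\mathrm{ms}}$ be the solution of $$a_h(u_H^{\mathrm{G\text{-}LOD}},\Phi^{\mathrm{ms}})=(f,\Phi^{\mathrm{ms}})\quad\text{for all }\Phi^{\mathrm{ms}}\in V^{\mathrm{ms}}.$$ Let $u_h\in V_h$ be the fine scale reference solution. Then $$\big\|u_h-\big((I_H|_{V_H})^{-1}\circ I_H\big)(u_H^{\mathrm{G\text{-}LOD}})\big\|_{L^2(\Omega)}+|||u_h-u_H^{\mathrm{G\text{-}LOD}}|||_h\lesssim\big(H+(1/H)^p k^{d/2}\theta^k\big)\|f\|_{L^2(\Omega)},$$ where $\theta\in(0,1)$ and $p\in\{0,1\}$ are the constants from (A8).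
   Context: Standing setting. $\Omega\subset\mathbb{R}^d$, $d\in\{1,2,3\}$, is a bounded Lipschitz domain with piecewise polygonal boundary; $f\in L^2(\Omega)$; $A\in L^\infty(\Omega,\mathbb{R}^{d\times d}_{sym})$ with spectrum $\sigma(A(x))\subset[\alpha_0,\beta_0]$, $0<\alpha_0\le\beta_0$, for a.e. $x\in\Omega$. $(\cdot,\cdot)$ denotes the $L^2(\Omega)$ inner product. $\mathcal{T}_H$ (coarse) and $\mathcal{T}_h$ (fine) are shape-regular conforming partitions of $\Omega$ with maximal element diameters $H$ and $h<H/2$; $\mathcal{T}_h$ is a refinement of $\mathcal{T}_H$ in which each coarse element is at least twice uniformly refined. (A4)/(A6): $V_h$ is a finite-dimensional space of functions on $\Omega$ (not necessarily a subspace of $H^1_0(\Omega)$), $V_H\subset V_h$ is a subspace associated with $\mathcal{T}_H$, $a_h(\cdot,\cdot)$ is a scalar product on $V_h$ and $a_H(\cdot,\cdot)$ a scalar product on $V_H$. (A5): $|||\cdot|||_h$ is a norm on $V_h$ and there are constants $0<\alpha\le\beta$ with $\alpha|||v|||_h^2\le a_h(v,v)$ and $a_h(v,w)\le\beta|||v|||_h|||w|||_h$ for all $v,w\in V_h$; $|||\cdot|||_H$ is a norm on $V_H$ (also evaluated on elements of $V_h$), and $C_{H,h}$ is a constant with $|||v|||_H\le C_{H,h}|||v|||_h$ for all $v\in V_h$. (A7): $I_H:V_h\to V_H$ is linear and there is a constant $C_{I_H}$ (depending only on shape regularity) such that for all $v_h\in V_h$, $v_H\in V_H$: $\|v_h-I_H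 v_h\|_{L^2(\Omega)}\le C_{I_H}H|||v_h|||_h$, $|||I_Hv_h|||_H\le C_{I_H}|||v_h|||_h$, $\|v_H-I_Hv_H\|_{L^2(\Omega)}\le C_{I_H}H|||v_H|||_H$, $\|I_Hv_H\|_{L^2(\Omega)}\le C_{I_H}|||v_H|||_H$; moreover $I_H|_{V_H}:V_H\to V_H$ is an isomorphism and $|||(I_H|_{V_H})^{-1}v_H|||_H\le C_{I_H^{-1}}|||v_H|||_H$ for all $v_H\in V_H$. Definitions. $W_h:=\{v\in V_h: I_Hv=0\}$, so $V_h=V_H\oplus W_h$. $P_h:V_h\to W_h$ is the $a_h$-orthogonal projection ($a_h(P_hv,w)=a_h(v,w)$ for all $w\in W_h$) and $V^{\mathrm{ms}}_\Omega:=(1-P_h)(V_H)$. Coarse patches: $U_0(T):=T$, $U_k(T):=\bigcup\{T'\in\mathcal{T}_H: T'\cap U_{k-1}(T)\ne\emptyset\}$. For an open set $U$ that is a union of fine elements, $\mathring W_h(U):=\{v\in W_h: v=0 \text{ in }\Omega\setminus U\}$. Bilinear forms $a_h^T$, $T\in\mathcal{T}_H$, are given with $a_h(v,w)=\sum_{T\in\mathcal{T}_H}a_h^T(v,w)$ for all $v,w\in V_h$ ($a_h^T$ acting only on $T$ or a small neighbourhood of $T$). Given patches $U(T)\supset T$, for $\phi\in V_h$ the local corrector $Q_h^T(\phi)\in\mathring W_h(U(T))$ solves $a_h(Q_h^T(\phi),w)=-a_h^T(\phi,w)$ for all $w\in\mathring W_h(U(T))$; $Q_h(\phi):=\sum_{T}Q_h^T(\phi)$,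 and $V^{\mathrm{ms}}:=\{\Phi_H+Q_h(\Phi_H):\Phi_H\in V_H\}$. $Q_h^{\Omega,T}$ and $Q_h^\Omega:=\sum_TQ_h^{\Omega,T}$ denote the correctors obtained with $U(T)=\Omega$ for all $T$. (A8): There are $p\in\{0,1\}$ and $\theta\in(0,1)$ (possibly depending on the contrast $\beta_0/\alpha_0$ but not on $H,h$ or the oscillations of $A$) such that for every $k\ge1$, with $U(T)=U_k(T)$ for all $T$, and all $\Phi_H\in V_H$: $|||(Q_h-Q_h^\Omega)(\Phi_H)|||_h^2\lesssim k^d\theta^{2k}(1/H)^{2p}|||\Phi_H+Q_h^\Omega(\Phi_H)|||_h^2$. Fine scale reference solution: $u_h\in V_h$ with $a_h(u_h,v)=(f,v)$ for all $v\in V_h$. Notation: $a\lesssim b$ means $a\le Cb$ with $C$ independent of $H$, $h$, $k$ and the oscillations of $A$ (it may depend on $\alpha,\beta,C_{I_H},C_{I_H^{-1}}$, shape regularity and the contrast). *)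

(* Defs.v *)
From HB Require Import structures.
From mathcomp Require Import all_boot all_order all_algebra.
Set Implicit Arguments. Unset Strict Implicit. Unset Printing Implicit Defensive.
Import Order.TTheory GRing.Theory Num.Theory.
Local Open Scope ring_scope.

Section Defs.
Variable R : rcfType.

Definition is_scalar_product_on (V : vectType R) (U : {vspace V})
  (a : V -> V -> R) : Prop :=
  [/\ forall (c : R) (u v w : V), u \in U -> v \in U -> w \in U ->
        a (c *: u + v) w = c * a u w + a v w,
      forall u v : V, u \in U -> v \in U -> a u v = a v u
    & forall v : V, v \in U -> v != 0 -> 0 < a v v].

Definition is_inner_product (L : lmodType R) (ip : L -> L -> R) : Prop :=
  [/\ forall (c : R) (u v w : L), ip (c *: u + v) w = c * ip u w + ip v w,
      forall u v : L, ip u v = ip v u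
    & forall v : L, v != 0 -> 0 < ip v v].

Definition l2norm (L : lmodType R) (ip : L -> L -> R) (v : L) : R :=
  Num.sqrt (ip v v).

Definition is_bilinear (V : lmodType R) (a : V -> V -> R) : Prop :=
  forall (c : R) (u v w : V),
    a (c *: u + v) w = c * a u w + a v w /\ a w (c *: u + v) = c * a w u + a w v.

Definition is_norm_on (V : vectType R) (U : {vspace V}) (n : V -> R) : Prop :=
  [/\ forall v, v \in U -> 0 <= n v,
      forall v, v \in U -> n v = 0 -> v = 0,
      forall (c : R) v, v \in U -> n (c *: v) = `|c| * n v
    & forall v w, v \in U -> w \in U -> n (v + w) <= n v + n w].

Definition is_corrector (V : vectType R) (inS : pred V)
  (a aT : V -> V -> R) (phi q : V) : Prop :=
  inS q /\ forall w, inS w -> a q w = - aT phi w.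
End Defs.

(* Coarse patches: U_0(T) = T, U_k(T) = union of coarse T' touching U_{k-1}(T).
   touch T' T'' means that the closed elements T' and T'' intersect. *)
Fixpoint patch (TH : finType) (touch : rel TH) (k : nat) (T : TH) : {set TH} :=
  match k with
  | 0 => [set T]
  | k'.+1 => [set T' | [exists T'', (T'' \in patch touch k' T) && touch T' T'']]
  end.

(* membership in  W_h(U_k(T)) (ring zero-of-W_h and vanishing outside the patch):
   I_H w = 0 and w vanishes on every fine element whose coarse parent is not
   in the patch U_k(T). vanish t is the subspace of functions vanishing on t. *)
Definition inWloc (R : rcfType) (Vh : vectType R) (IH : Vh -> Vh)
  (TH Th : finType) (touch : rel TH) (parent : Th -> TH)
  (vanish : Th -> {vspace Vh}) (k : nat) (T : TH) : pred Vh :=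
  fun w => (IH w == 0) &&
    [forall t : Th, (parent t \notin patch touch k T) ==> (w \in vanish t)].

(* Main.v *)
Require Import Defs.
From HB Require Import structures.
From mathcomp Require Import all_boot all_order all_algebra.
Import Order.TTheory GRing.Theory Num.Theory.
From mathcomp Require Import ring lra.
Set Implicit Arguments. Unset Strict Implicit.
Local Open Scope ring_scope.


Section Aux.
Variable R : rcfType.

Definition lin1 (T : lmodType R) (a : T -> T -> R) :=
  forall (c : R) (u v w : T), a (c *: u + v) w = c * a u w + a v w.

Section L1.
Variables (T : lmodType R) (a : T -> T -> R) (la : lin1 a).
Lemma a0l w : a 0 w = 0.
Proof. have := la 1 0 0 w; rewrite scale1r addr0 mul1r => /eqP.
by rewrite -subr_eq0 [X in X == 0 -> _](_ : _ = - a 0 w) ?oppr_eq0 => [/eqP|]; last ring. Qed.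
Lemma aDl u v w : a (u + v) w = a u w + a v w.
Proof. by have := la 1 u v w; rewrite scale1r mul1r. Qed.
Lemma aNl u w : a (- u) w = - a u w.
Proof. by have := la (-1) u 0 w; rewrite addr0 scaleN1r a0l addr0 mulN1r. Qed.
Lemma aBl u v w : a (u - v) w = a u w - a v w.
Proof. by rewrite aDl aNl. Qed.
Lemma asuml (I : Type) (r : seq I) (P : pred I) (F : I -> T) w :
  a (\sum_(i <- r | P i) F i) w = \sum_(i <- r | P i) a (F i) w.
Proof. exact: (big_morph (fun x => a x w) (fun x y => aDl x y w) (a0l w)). Qed.
End L1.

Section CS.
Variables (T : lmodType R) (a : T -> T -> R) (la : lin1 a)
  (sa : forall u v, a u v = a v u) (pa : forall v, v != 0 -> 0 < a v v).
Lemma aDr u v w : a w (u + v) = a w u + a w v.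
Proof. by rewrite sa aDl // (sa u) (sa v). Qed.
Lemma aZr c u w : a w (c *: u) = c * a w u.
Proof. by rewrite sa -[c *: u]addr0 la a0l // addr0 sa. Qed.
Lemma aBr u v w : a w (u - v) = a w u - a w v.
Proof. by rewrite sa aBl // (sa u) (sa v). Qed.
Lemma ge0a v : 0 <= a v v.
Proof. case: (eqVneq v 0) => [->|/pa/ltW //]; by rewrite a0l. Qed.
Lemma cs2 u v : a u v ^+ 2 <= a u u * a v v.
Proof.
case: (eqVneq v 0) => [->|nv].
  by rewrite sa a0l // expr2 mulr0 a0l // mulr0.
have vv := pa nv. set t := a u v / a v v.
have tv : t * a v v = a u v by rewrite /t mulfVK // gt_eqF.
have := ge0a (u - t *: v).
rewrite aBl // aBr // aBr // -[t *: v]addr0 !la !a0l // !addr0 (sa v u) !aZr => h.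
clearbody t.
have h1 : 0 <= a u u - t * a u v by nra.
have h2 : 0 <= (a u u - t * a u v) * a v v by apply: mulr_ge0 => //; apply: ltW.
nra.
Qed.
Lemma cs u v : a u v <= Num.sqrt (a u u) * Num.sqrt (a v v).
Proof.
apply: (le_trans (ler_norm _)); rewrite -sqrtr_sqr -sqrtrM ?ge0a //.
by rewrite ler_sqrt ?mulr_ge0 ?ge0a // cs2.
Qed.
Lemma l2tri u v : Num.sqrt (a (u + v) (u + v)) <= Num.sqrt (a u u) + Num.sqrt (a v v).
Proof.
rewrite -(ger0_norm (addr_ge0 (sqrtr_ge0 (a u u)) (sqrtr_ge0 (a v v)))) -sqrtr_sqr.
rewrite ler_sqrt ?sqr_ge0 // aDl // !aDr // (sa v u).
have := cs u v.
rewrite sqrrD !sqr_sqrtr ?ge0a //. lra.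
Qed.
Lemma l2N u : a (- u) (- u) = a u u.
Proof. by rewrite aNl // sa aNl // opprK. Qed.
Lemma l2triB u v : Num.sqrt (a (u - v) (u - v)) <= Num.sqrt (a u u) + Num.sqrt (a v v).
Proof. by rewrite -(l2N v) l2tri. Qed.
End CS.

Section Norm.
Variables (V : vectType R) (n : V -> R) (hn : is_norm_on fullv n).
Lemma n_ge0 v : 0 <= n v. Proof. by case: hn => h _ _ _; apply: h; rewrite memvf. Qed.
Lemma nN v : n (- v) = n v.
Proof. case: hn => _ _ h _; by rewrite -scaleN1r h ?memvf // normrN normr1 mul1r. Qed.
Lemma ntri v w : n (v + w) <= n v + n w.
Proof. by case: hn => _ _ _ h; apply: h; rewrite memvf. Qed.
Lemma ntriB v w : n (v - w) <= n v + n w.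
Proof. by rewrite -(nN w) ntri. Qed.
End Norm.

Lemma quad_bound (alpha x K : R) : 0 < alpha -> 0 <= x -> 0 <= K ->
  alpha * x ^+ 2 <= K * x -> x <= K / alpha.
Proof.
move=> ha hx hK h; rewrite ler_pdivlMr //.
case: (eqVneq x 0) => [->|nx]; first by rewrite mul0r.
have xp : 0 < x by rewrite lt_def nx hx.
nra.
Qed.

Lemma abs_mul (x y : R) : 0 <= y -> x * y <= `|x| * y.
Proof. by move=> hy; apply: ler_wpM2r => //; apply: ler_norm. Qed.

End Aux.


Unset Implicit Arguments.
Theorem theorem3p1
  (R : rcfType) (d p : nat) (alpha beta CI Cinv theta C8 Hmax : R) :
  (1 <= d <= 3)%N -> (p <= 1)%N ->
  0 < alpha -> alpha <= beta -> 0 < theta -> theta < 1 ->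
  exists C : R,
  forall (Vh : vectType R) (L : lmodType R) (ip : L -> L -> R)
    (emb : {linear Vh -> L}) (f : L)
    (VH : {vspace Vh}) (ah aH : Vh -> Vh -> R) (normh normH : Vh -> R)
    (CHh H : R) (IH : {linear Vh -> Vh}) (JH : Vh -> Vh)
    (TH Th : finType) (touch : rel TH) (parent : Th -> TH)
    (vanish : Th -> {vspace Vh}) (aT : TH -> Vh -> Vh -> R)
    (Q : nat -> TH -> Vh -> Vh) (QO : TH -> Vh -> Vh) (uh : Vh),
  (* L is the space L^2(Omega), V_h is (embedded as) a space of functions in it *)
  is_inner_product ip ->
  (* mesh size *)
  0 < H -> H <= Hmax ->
  (* (A4)/(A6) *)
  is_scalar_product_on fullv ah -> is_scalar_product_on VH aH ->
  (* (A5) *)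
  is_norm_on fullv normh -> is_norm_on VH normH ->
  (forall v, alpha * normh v ^+ 2 <= ah v v) ->
  (forall v w, ah v w <= beta * normh v * normh w) ->
  (forall v, normH v <= CHh * normh v) ->
  (* (A7) *)
  (forall v, IH v \in VH) ->
  (forall v, l2norm ip (emb (v - IH v)) <= CI * H * normh v) ->
  (forall v, normH (IH v) <= CI * normh v) ->
  (forall v, v \in VH -> l2norm ip (emb (v - IH v)) <= CI * H * normH v) ->
  (forall v, v \in VH -> l2norm ip (emb (IH v)) <= CI * normH v) ->
  (forall v, v \in VH -> [/\ JH v \in VH, IH (JH v) = v & JH (IH v) = v]) ->
  (forall v, v \in VH -> normH (JH v) <= Cinv * normH v) ->
  (* coarse element geometry *)
  (forall T, touch T T) -> symmetric touch ->
  (* element bilinear forms *)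
  (forall T, is_bilinear (aT T)) ->
  (forall v w, ah v w = \sum_(T : TH) aT T v w) ->
  (* local correctors on U_k(T) and global correctors *)
  (forall k T phi, is_corrector (inWloc IH touch parent vanish k T)
                                ah (aT T) phi (Q k T phi)) ->
  (forall T phi, is_corrector (fun w => IH w == 0) ah (aT T) phi (QO T phi)) ->
  (* (A8) *)
  (forall k Phi, (1 <= k)%N -> Phi \in VH ->
     normh (\sum_(T : TH) Q k T Phi - \sum_(T : TH) QO T Phi) ^+ 2
     <= C8 * (k%:R ^+ d * theta ^+ (2 * k) * H ^- (2 * p))
           * normh (Phi + \sum_(T : TH) QO T Phi) ^+ 2) ->
  (* fine scale reference solution *)
  (forall v, ah uh v = ip f (emb v)) ->
  forall (k : nat) (uLOD : Vh), (1 <= k)%N ->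
  (* G-LOD solution in V^ms built with U(T) = U_k(T) *)
  (exists2 Phi, Phi \in VH & uLOD = Phi + \sum_(T : TH) Q k T Phi) ->
  (forall Phi, Phi \in VH ->
     ah uLOD (Phi + \sum_(T : TH) Q k T Phi)
     = ip f (emb (Phi + \sum_(T : TH) Q k T Phi))) ->
  l2norm ip (emb (uh - JH (IH uLOD))) + normh (uh - uLOD)
  <= C * (H + H ^- p * Num.sqrt (k%:R ^+ d) * theta ^+ k) * l2norm ip f.
Proof.

move=> hd hp ha hab ht0 ht1.
set c := `|CI|. set ci := `|Cinv|. set hm := `|Hmax|. set c8 := Num.sqrt `|C8|.
set P := c * (hm + c * ci).
set a1 := c * (1 + ci * c) * P / alpha.
set K2 := 1 + c * (hm + 1) * ci * c.
set b1 := K2 * (beta / alpha) * (c / alpha).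
set b2 := K2 * (beta / alpha) * (c8 * (P + c * hm) / alpha).
exists (a1 + b1 + b2).
move=> Vh L ip emb f VH ah aH normh normH CHh H IH JH TH Th touch parent vanish
  aT Q QO uh hip hH0 hHm hah haH hnh hnH hcoer hbnd hHh hIV hI1 hI2 hI3 hI4 hJ hJn
  htt hts haT hsum hQ hQO hA8 huh k uLOD hk [Psi hPsi huL] hgal.
case: hip => ipl ips ipp.
have lip : lin1 ip by exact: ipl.
case: hah => ahl ahs ahp.
have lah : lin1 ah by move=> ????; apply: ahl; rewrite memvf.
have sah u v : ah u v = ah v u by apply: ahs; rewrite memvf.
have pah v : v != 0 -> 0 < ah v v by apply: ahp; rewrite memvf.
case: hnH => nH0 _ _ _.
have c0 : 0 <= c by apply: normr_ge0.
have ci0 : 0 <= ci by apply: normr_ge0.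
have hm0 : 0 <= hm by apply: normr_ge0.
have c80 : 0 <= c8 by apply: sqrtr_ge0.
have Hhm : H <= hm by apply: (le_trans hHm); apply: ler_norm.
have nh0 := n_ge0 hnh.
set Nf := l2norm ip f.
have Nf0 : 0 <= Nf by apply: sqrtr_ge0.
have embD x y : l2norm ip (emb (x + y)) <= l2norm ip (emb x) + l2norm ip (emb y).
  by rewrite /l2norm linearD; apply: l2tri.
have embB x y : l2norm ip (emb (x - y)) <= l2norm ip (emb x) + l2norm ip (emb y).
  by rewrite /l2norm linearB; apply: l2triB.
have hI1' v : l2norm ip (emb (v - IH v)) <= c * H * normh v.
  apply: (le_trans (hI1 v)); rewrite -!mulrA; apply: abs_mul; exact: mulr_ge0 (ltW hH0) (nh0 v).
have hI3' z : z \in VH -> l2norm ip (emb (z - IH z)) <= c * H * normH z.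
  move=> zV; apply: (le_trans (hI3 z zV)); rewrite -!mulrA; apply: abs_mul.
  exact: mulr_ge0 (ltW hH0) (nH0 z zV).
have hI4' z : z \in VH -> l2norm ip (emb (IH z)) <= c * normH z.
  move=> zV; apply: (le_trans (hI4 z zV)); apply: abs_mul; exact: nH0.
have hIb v : normH (IH v) <= c * normh v.
  apply: (le_trans (hI2 v)); apply: abs_mul; exact: nh0.
have hJb y : y \in VH -> normH (JH y) <= ci * normH y.
  move=> yV; apply: (le_trans (hJn y yV)); apply: abs_mul; exact: nH0.
have hVHemb z : z \in VH -> l2norm ip (emb z) <= c * (hm + 1) * normH z.
  move=> zV; have nz := nH0 z zV.
  have := embD (z - IH z) (IH z); rewrite subrK => h.
  have e1 : c * H * normH z <= c * hm * normH z.
    by apply: ler_wpM2r => //; apply: ler_wpM2l.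
  apply: (le_trans h); have := hI3' z zV; have := hI4' z zV; nra.
have hP v : l2norm ip (emb v) <= P * normh v.
  have := embD (v - IH v) (IH v); rewrite subrK => h; apply: (le_trans h).
  have [JV IJ _] := hJ _ (hIV v).
  have h2 := hI4' _ JV; rewrite IJ in h2.
  have h3 := hJb _ (hIV v). have h4 := hIb v. have h5 := hI1' v.
  have n1 := nH0 _ JV. have n2 := nH0 _ (hIV v). have n3 := nh0 v.
  have e1 : c * H * normh v <= c * hm * normh v.
    by apply: ler_wpM2r => //; apply: ler_wpM2l.
  have e2 : c * normH (JH (IH v)) <= c * (ci * normH (IH v)) by apply: ler_wpM2l.
  have e3 : c * (ci * normH (IH v)) <= c * (ci * (c * normh v)).
    by apply: ler_wpM2l => //; apply: ler_wpM2l.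
  rewrite /P. nra.
have Jlin a b : JH (IH a - IH b) = JH (IH a) - JH (IH b).
  have [Ja IJa _] := hJ _ (hIV a). have [Jb IJb _] := hJ _ (hIV b).
  have zV : JH (IH a) - JH (IH b) \in VH by apply: memvB.
  have [_ _ JIz] := hJ _ zV.
  by rewrite -{1}IJa -{1}IJb -linearB JIz.
have hJI v : l2norm ip (emb (v - JH (IH v))) <= c * H * (1 + ci * c) * normh v.
  have [JV IJ _] := hJ _ (hIV v).
  have -> : v - JH (IH v) = (v - IH v) - (JH (IH v) - IH (JH (IH v))).
    by rewrite IJ [in RHS]opprB [in RHS]addrA subrK.
  apply: (le_trans (embB _ _)).
  have h1 := hI1' v. have h2 := hI3' _ JV.
  have e2 : c * H * normH (JH (IH v)) <= c * H * (ci * normH (IH v)).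
    by apply: ler_wpM2l; [apply: mulr_ge0 => //; apply: ltW|apply: hJb; apply: hIV].
  have e3 : c * H * (ci * normH (IH v)) <= c * H * (ci * (c * normh v)).
    by apply: ler_wpM2l; [apply: mulr_ge0 => //; apply: ltW|apply: ler_wpM2l].
  have : c * H * (1 + ci * c) * normh v = c * H * normh v + c * H * (ci * (c * normh v)) by ring.
  lra.
set Phi := JH (IH uh).
have [PhiV IPhi _] := hJ _ (hIV uh).
set QOP := \sum_(T : TH) QO T Phi.
set QkP := \sum_(T : TH) Q k T Phi.
have hIQO : IH QOP = 0.
  by rewrite /QOP linear_sum big1 // => T _; case: (hQO T Phi) => /eqP.
have horth w' : IH w' = 0 -> ah (Phi + QOP) w' = 0.
  move=> hw'; rewrite aDl // asuml //.
  under eq_bigr => T _ do rewrite (hQO T Phi).2 ?hw' //.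
  by rewrite sumrN -hsum subrr.
set w := uh - (Phi + QOP).
have hIw : IH w = 0 by rewrite /w linearB linearD IPhi hIQO addr0 subrr.
have hw : normh w <= c * H * Nf / alpha.
  apply: quad_bound => //; first by apply: mulr_ge0 => //; apply: mulr_ge0 => //; apply: ltW.
  apply: (le_trans (hcoer w)).
  rewrite {1}/w aBl // horth // subr0 huh.
  apply: (le_trans (cs lip ips ipp _ _)).
  have := hI1' w; rewrite hIw subr0 => h.
  rewrite -/(l2norm ip f) -/(l2norm ip (emb w)) -/Nf.
  have := ler_wpM2l Nf0 h. have : Nf * (c * H * normh w) = c * H * Nf * normh w by ring.
  lra.
have hu : normh uh <= P * Nf / alpha.
  have P0 : 0 <= P by rewrite /P; apply: mulr_ge0 => //; apply: addr_ge0 => //; apply: mulr_ge0.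
  apply: quad_bound => //; first by apply: mulr_ge0.
  apply: (le_trans (hcoer uh)); rewrite huh.
  apply: (le_trans (cs lip ips ipp _ _)).
  rewrite -/(l2norm ip f) -/(l2norm ip (emb uh)) -/Nf.
  have := ler_wpM2l Nf0 (hP uh). have : Nf * (P * normh uh) = P * Nf * normh uh by ring.
  lra.
have P0 : 0 <= P by rewrite /P; apply: mulr_ge0 => //; apply: addr_ge0 => //; apply: mulr_ge0.
have ial : 0 <= alpha^-1 by rewrite invr_ge0; apply: ltW.
have be0 : 0 <= beta by apply: (le_trans (ltW ha)).
set s := H ^- p * Num.sqrt (k%:R ^+ d) * theta ^+ k.
have s0 : 0 <= s.
  apply: mulr_ge0; last by apply: exprn_ge0; apply: ltW.
  apply: mulr_ge0; last exact: sqrtr_ge0.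
  by rewrite invr_ge0; apply: exprn_ge0; apply: ltW.
have es : s ^+ 2 = k%:R ^+ d * theta ^+ (2 * k) * H ^- (2 * p).
  rewrite /s !exprMn sqr_sqrtr ?exprn_ge0 ?ler0n // exprVn -!exprM (mulnC k) (mulnC p).
  ring.
clearbody s.
have hD : normh (QkP - QOP) <= c8 * s * normh (Phi + QOP).
  have h := hA8 k Phi hk PhiV; rewrite -es -/QkP -/QOP in h.
  have h' : normh (QkP - QOP) ^+ 2 <= (c8 * s * normh (Phi + QOP)) ^+ 2.
    apply: (le_trans h); rewrite !exprMn /c8 sqr_sqrtr ?normr_ge0 //.
    apply: ler_wpM2r; first exact: sqr_ge0.
    apply: ler_wpM2r; first exact: sqr_ge0.
    exact: ler_norm.
  move: h'; rewrite ler_sqr // nnegrE //.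
  by apply: mulr_ge0 => //; apply: mulr_ge0.
set V := Phi + QkP.
set e := uh - uLOD.
have g1 : ah uLOD V = ip f (emb V) by apply: hgal.
have g2 : ah uLOD uLOD = ip f (emb uLOD).
  by rewrite {2}huL hgal // -huL.
have hg : ah e (V - uLOD) = 0.
  by rewrite /e (aBl lah) huh linearB (aBr lip ips) (aBr lah sah) g1 g2 subrr.
have he : normh e <= beta * normh (uh - V) / alpha.
  apply: quad_bound => //; first by apply: mulr_ge0.
  apply: (le_trans (hcoer e)).
  have ee : e = (uh - V) + (V - uLOD) by rewrite /e addrA subrK.
  rewrite {2}ee (aDr lah sah) hg addr0.
  apply: (le_trans (hbnd _ _)).
  have : beta * normh e * normh (uh - V) = beta * normh (uh - V) * normh e by ring.
  lra.
have huV : normh (uh - V) <= normh w + normh (QkP - QOP).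
  have -> : uh - V = w - (QkP - QOP).
    by rewrite /V /w [in RHS]opprB [in RHS]addrA [in RHS]opprD [in RHS]addrA subrK opprD addrA.
  exact: ntriB.
have hPQ : normh (Phi + QOP) <= normh uh + normh w.
  have -> : Phi + QOP = uh - w by rewrite /w opprB [in RHS]addrC subrK.
  exact: ntriB.
have hL2 : l2norm ip (emb (uh - JH (IH uLOD)))
    <= c * H * (1 + ci * c) * normh uh + c * (hm + 1) * ci * c * normh e.
  have -> : uh - JH (IH uLOD) = (uh - JH (IH uh)) + JH (IH uh - IH uLOD).
    by rewrite Jlin addrA subrK.
  apply: (le_trans (embD _ _)).
  rewrite -linearB -/e.
  have [JV _ _] := hJ _ (hIV e).
  have k1 := hVHemb _ JV.
  have k2 : c * (hm + 1) * normH (JH (IH e)) <= c * (hm + 1) * (ci * normH (IH e)).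
    apply: ler_wpM2l; first by apply: mulr_ge0 => //; apply: addr_ge0.
    by apply: hJb; apply: hIV.
  have k3 : c * (hm + 1) * (ci * normH (IH e)) <= c * (hm + 1) * (ci * (c * normh e)).
    apply: ler_wpM2l; first by apply: mulr_ge0 => //; apply: addr_ge0.
    by apply: ler_wpM2l.
  have := hJI uh.
  have : c * (hm + 1) * (ci * (c * normh e)) = c * (hm + 1) * ci * c * normh e by ring.
  lra.
have f1 : normh w <= c * hm * Nf / alpha.
  apply: (le_trans hw); apply: ler_wpM2r => //; apply: ler_wpM2r => //.
  exact: ler_wpM2l.
have f2 : normh (Phi + QOP) <= (P + c * hm) * Nf / alpha.
  have : (P + c * hm) * Nf / alpha = P * Nf / alpha + c * hm * Nf / alpha by ring.
  lra.
have f3 : normh (QkP - QOP) <= c8 * s * ((P + c * hm) * Nf / alpha).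
  by apply: (le_trans hD); apply: ler_wpM2l => //; apply: mulr_ge0.
have ba0 : 0 <= beta / alpha by apply: mulr_ge0.
set T := beta / alpha * (c * H * Nf / alpha + c8 * s * ((P + c * hm) * Nf / alpha)).
have gg3 : normh e <= T.
  apply: (le_trans he).
  have : beta * normh (uh - V) / alpha <= beta * (normh w + normh (QkP - QOP)) / alpha.
    by apply: ler_wpM2r => //; apply: ler_wpM2l.
  have : beta / alpha * (normh w + normh (QkP - QOP)) <= T.
    by apply: ler_wpM2l => //; apply: lerD.
  have : beta * (normh w + normh (QkP - QOP)) / alpha
    = beta / alpha * (normh w + normh (QkP - QOP)) by ring.
  lra.
have K0 : 0 <= c * (hm + 1) * ci * c.
  by apply: mulr_ge0 => //; apply: mulr_ge0 => //; apply: mulr_ge0 => //; apply: addr_ge0.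
have gg1 : c * H * (1 + ci * c) * normh uh <= c * H * (1 + ci * c) * (P * Nf / alpha).
  apply: ler_wpM2l => //; apply: mulr_ge0; first by apply: mulr_ge0 => //; apply: ltW.
  by apply: addr_ge0 => //; apply: mulr_ge0.
have gg2 : c * (hm + 1) * ci * c * normh e <= c * (hm + 1) * ci * c * T.
  exact: ler_wpM2l.
have a10 : 0 <= a1.
  rewrite /a1; apply: mulr_ge0 => //; apply: mulr_ge0 => //; apply: mulr_ge0 => //.
  by apply: addr_ge0 => //; apply: mulr_ge0.
have K20 : 0 <= K2 by rewrite /K2; apply: addr_ge0.
have b10 : 0 <= b1 by rewrite /b1; apply: mulr_ge0; [apply: mulr_ge0|apply: mulr_ge0].
have b20 : 0 <= b2.
  have : 0 <= P + c * hm by rewrite addr_ge0 // mulr_ge0.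
  by move=> h; rewrite /b2 !mulr_ge0.
have x1 : 0 <= a1 * s * Nf by apply: mulr_ge0 => //; apply: mulr_ge0.
have x2 : 0 <= b1 * s * Nf by apply: mulr_ge0 => //; apply: mulr_ge0.
have x3 : 0 <= b2 * H * Nf by rewrite mulr_ge0 // mulr_ge0 // ltW.
have eq : (a1 + b1 + b2) * (H + s) * Nf =
  (c * H * (1 + ci * c) * (P * Nf / alpha) + c * (hm + 1) * ci * c * T + T)
  + (a1 * s * Nf + b1 * s * Nf + b2 * H * Nf).
  rewrite /a1 /b1 /b2 /K2 /T; ring.
rewrite -/e eq.
lra.

Qed.
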